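(* Let $s$ be a non-empty string with $r$ maximal runs. Every admissible bilateral run-peeling decomposition of $s$ emits at least $\lceil r/2\rceil$ tokens, and the Flashback decomposition attains this minimum: the number of tokens of $\mathcal{F}(s)$ other than the sentinel token $\tau_0=(\texttt{@}\texttt{\$},1)$ is exactly $\lceil r/2\rceil$.
   Context: A maximal run of a string is a maximal block of consecutive equal symbols. An admissible bilateral run-peeling decomposition of a non-empty string $s$ is obtained by repeatedly applying the following rule to an active span (initially all of $s$) until it is consumed: (Termination) if the active span consists of a single run or of two adjacent runs, emit one terminal token for the span and stop; (Peeling step) otherwise, let $L$ be the length of the span's leading run (longest prefix of one repeated symbol) and $R$ the length of its trailing run (longest suffix of one repeated symbol), choose any integers $x\in\{1,\dots,L\}$ and $y\in\{1,\dots,R\}$, emit one token formed by the peeled prefix of length $x$ and the peeled suffix of length $y$, and continue with the remaining middle as the active span. The Flashback decomposition $\mathcal{F}(s)$: let $\texttt{@},\texttt{\$}$ be distinct symbols not occurring in $s$, $\hat s=\texttt{@}\,s\,\texttt{\$}$ with positions $1,\dots,n+2$ ($n=|s|$), $\hat s[i..j)$ the substring at positions $i,\dots,j-1$. Starting from active span $[lo,hi)=[1,n+3)$: if $lo\ge hi$, stop. Let $\ell$ be the leading-run length of $\hat s[lo..hi)$. If $\ell=hi-lo$, append $(\hat s[lo..hi),0)$ and stop. Otherwise let $\hat s[r'..hi)$ be the trailing run of $\hat s[lo..hi)$ and $\sigma=\hat s[lo..lo+\ell)\cdot\hat s[r'..hi)$; if $lo+\ell\ge r'$, append $(\sigma,0)$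 and stop; otherwise append $(\sigma,\ell)$ and repeat with $[lo+\ell,r')$. *)

(* Defs.v *)
From mathcomp Require Import all_boot.
Set Implicit Arguments. Unset Strict Implicit. Unset Printing Implicit Defensive.

Section Strings.
Variable T : eqType.

Fixpoint nruns (s : seq T) : nat :=
  match s with
  | [::] => 0
  | x :: u => match u with
              | [::] => 1
              | y :: _ => (x != y) + nruns u
              end
  end.

Definition leadlen (u : seq T) : nat :=
  match u with
  | [::] => 0
  | x :: u' => (find (fun y => y != x) u').+1
  end.

Definition traillen (u : seq T) : nat := leadlen (rev u).

Inductive token : Type :=
  | TermTok of seq T
  | PeelTok of seq T & seq T.

Inductive admissible : seq T -> seq token -> Prop :=
  | adm_term (s : seq T) :
      s != [::] -> nruns s <= 2 -> admissible s [:: TermTok s]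
  | adm_peel (s : seq T) (x y : nat) (toks : seq token) :
      2 < nruns s ->
      0 < x <= leadlen s -> 0 < y <= traillen s ->
      admissible (drop x (take (size s - y) s)) toks ->
      admissible s (PeelTok (take x s) (drop (size s - y) s) :: toks).

Definition sym : eqType := (bool + T)%type.
Definition at_sym : sym := inl true.
Definition dollar_sym : sym := inl false.

(* \hat s = @ s $ , positions 1 .. n+2. *)
Definition hat (s : seq T) : seq sym := at_sym :: map inr s ++ [:: dollar_sym].

(* \hat s[i..j) : positions i, ..., j-1 (1-based). *)
Definition subs (u : seq sym) (i j : nat) : seq sym := take (j - i) (drop i.-1 u).

Definition leadlen_sym (u : seq sym) : nat :=
  match u with
  | [::] => 0
  | x :: u' => (find (fun y => y != x) u').+1
  end.

Fixpoint fb_aux (u : seq sym) (fuel lo hi : nat) : seq (seq sym * nat) :=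
  match fuel with
  | 0 => [::]
  | f.+1 =>
    if hi <= lo then [::] else
    let t := subs u lo hi in
    let l := leadlen_sym t in
    if l == hi - lo then [:: (t, 0)] else
    let r' := hi - leadlen_sym (rev t) in
    let sigma := subs u lo (lo + l) ++ subs u r' hi in
    if r' <= lo + l then [:: (sigma, 0)]
    else (sigma, l) :: fb_aux u f (lo + l) r'
  end.

(* Flashback decomposition F(s): start from [1, n+3).  The fuel n+3 is
   never exhausted, since every non-final step shrinks the span. *)
Definition flashback (s : seq T) : seq (seq sym * nat) :=
  fb_aux (hat s) (size s + 3) 1 (size s + 3).

Definition sentinel_token : seq sym * nat := ([:: at_sym; dollar_sym], 1).

End Strings.

(* Main.v *)
Require Import Defs.
From mathcomp Require Import all_boot zify.
Set Implicit Arguments. Unset Strict Implicit.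

Section Gen.
Variable S : eqType.
Implicit Types (u v w : seq S) (a b c : S).

Lemma nruns_nseqS a k : nruns (nseq k.+1 a) = 1.
Proof. elim: k => [|k IH] //=. by rewrite /= eqxx in IH *. Qed.

Lemma nruns_nseq_le a k : nruns (nseq k a) <= 1.
Proof. by case: k => // k; rewrite nruns_nseqS. Qed.

Lemma nruns_pos a u : 0 < nruns (a :: u).
Proof. elim: u a => [|b u IH] a //=. exact: leq_trans (IH b) (leq_addl _ _). Qed.

Lemma nruns_cat_le u v : nruns (u ++ v) <= nruns u + nruns v.
Proof.
elim: u => [|a u IH] //=.
case: u IH => [|b u] IH.
  case: v {IH} => [|b v] //=. lia.
rewrite cat_cons.
change (nruns (a :: b :: (u ++ v))) with ((a != b) + nruns (b :: (u ++ v))).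
change (nruns (a :: b :: u)) with ((a != b) + nruns (b :: u)).
move: IH; rewrite cat_cons; lia.
Qed.

Lemma nruns_cat a u b v :
  nruns ((a :: u) ++ (b :: v)) + (last a u == b) = nruns (a :: u) + nruns (b :: v).
Proof.
elim: u a => [|c u IH] a.
  rewrite /=. case: (a == b); rewrite /=; lia.
have := IH c. rewrite !cat_cons.
change (nruns (a :: c :: (u ++ b :: v))) with ((a != c) + nruns (c :: (u ++ b :: v))).
change (nruns (a :: c :: u)) with ((a != c) + nruns (c :: u)).
rewrite [last a _]/=. lia.
Qed.

Lemma leadlen_le w : leadlen w <= size w.
Proof. case: w => [|a u] //=. by rewrite ltnS find_size. Qed.

Lemma lead_nseq a u x : x <= leadlen (a :: u) -> take x (a :: u) = nseq x a.
Proof.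
case: x => [|x] //= H. congr cons.
elim: u x H => [|b u IH] [|x] //= H.
move: H; case: (b =P a) => [->|] //= H.
by rewrite IH.
Qed.

Lemma lead_ne a u : leadlen (a :: u) < size (a :: u) ->
  nth a (a :: u) (leadlen (a :: u)) != a.
Proof.
rewrite /= ltnS -has_find => H. exact: (nth_find a H).
Qed.

End Gen.

Section Adm.
Variable S : eqType.

Lemma adm_nonempty (s : seq S) toks : admissible s toks -> s != [::].
Proof. by case => // s' x y t; case: s'. Qed.

Lemma take_run (s : seq S) x : x <= leadlen s -> nruns (take x s) <= 1.
Proof. case: s => [|a u] H //. rewrite lead_nseq //. exact: nruns_nseq_le. Qed.

Lemma drop_nseq_rev (s : seq S) y : s != [::] -> y <= leadlen (rev s) ->
  exists c, drop (size s - y) s = nseq y c.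
Proof.
move=> sn.
case E: (rev s) => [|c v] H.
  by move: E sn; case: s => // a s; rewrite rev_cons; case: (rev s).
exists c. rewrite -(revK (drop _ _)) -take_rev E lead_nseq // rev_nseq //.
Qed.

Lemma drop_run (s : seq S) y : y <= traillen s -> nruns (drop (size s - y) s) <= 1.
Proof.
case: s => [|a s] //. move/drop_nseq_rev => [//|c ->]. exact: nruns_nseq_le.
Qed.

Lemma adm_lower (s : seq S) toks : admissible s toks -> (nruns s).+1./2 <= size toks.
Proof.
elim => [s' _ H | s' x y t H2 /andP[x0 Hx] /andP[y0 Hy] Hadm IH] /=.
  lia.
have mne := adm_nonempty Hadm.
set mid := drop x (take (size s' - y) s') in mne IH.
have Hlt : x < size (take (size s' - y) s').
  rewrite ltnNge; apply/negP => Hle. by move: mne; rewrite /mid drop_oversize.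
have Hs : s' = (take x s' ++ mid) ++ drop (size s' - y) s'.
  rewrite /mid -{1}(take_takel s' (_ : x <= size s' - y)); last first.
    move: Hlt; rewrite size_take; case: ifP => Hif; lia.
  by rewrite !cat_take_drop.
have Hn : nruns s' <= nruns mid + 2.
  rewrite Hs. apply: leq_trans (nruns_cat_le _ _) _.
  have := nruns_cat_le (take x s') mid.
  have := take_run Hx. have := drop_run Hy. lia.
lia.
Qed.

End Adm.

Section GS.
Variable S : eqType.

Fixpoint G (f : nat) (w : seq S) : seq (seq S * nat) :=
 match f with
 | 0 => [::]
 | f'.+1 =>
  if size w == 0 then [::] else
  let l := leadlen w in
  if l == size w then [:: (w,0)] else
  let l' := leadlen (rev w) in
  let sigma := take l w ++ drop (size w - l') w in
  if size w - l' <= l then [:: (sigma,0)]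
  else (sigma,l) :: G f' (drop l (take (size w - l') w))
 end.

Lemma lead_pos (w : seq S) : w != [::] -> 0 < leadlen w.
Proof. by case: w. Qed.

Lemma G_count f (w : seq S) : w != [::] -> size w <= f ->
  size (G f w) = (nruns w).+1./2.
Proof.
elim: f w => [|f IH] w wn sz.
  by case: w wn sz.
rewrite /=.
case: w wn sz => [|a u] // _ sz.
rewrite [size (a :: u) == 0]/=.
set w := a :: u.
have wn : w != [::] by [].
have hl := leadlen_le w.
have hl0 := lead_pos wn.
have Ht := lead_nseq (x := leadlen w) (a := a) (u := u) (leqnn _).
have [c Hd] := drop_nseq_rev wn (leqnn (leadlen (rev w))).
have hr : 0 < leadlen (rev w) by apply: lead_pos; rewrite /w rev_cons; case: (rev u).
have hr1 := leadlen_le (rev w). rewrite size_rev in hr1.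
have nw : 0 < nruns w := nruns_pos a u.
case: eqP => // _.
case: eqP => E1.
  have -> : nruns w = 1 by rewrite -(take_size w) -{1}E1 Ht -(prednK hl0) nruns_nseqS.
  by [].
case: leqP => E2.
  rewrite (_ : forall x : seq S * nat, size [:: x] = 1) //.
  have Hw : w = take (leadlen w) w ++ drop (leadlen w) w by rewrite cat_take_drop.
  have Hd2 : drop (leadlen w) w = nseq (leadlen (rev w) - (leadlen w - (size w - leadlen (rev w)))) c.
    by rewrite -[in LHS](subnK E2) -drop_drop Hd drop_nseq.
  have : nruns w <= 2.
    rewrite Hw Hd2 Ht. apply: leq_trans (nruns_cat_le _ _) _.
    have := nruns_nseq_le a (leadlen w).
    have := nruns_nseq_le c (leadlen (rev w) - (leadlen w - (size w - leadlen (rev w)))). lia.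
  lia.
set l := leadlen w in hl hl0 Ht E1 E2 *.
set l' := leadlen (rev w) in Hd hr hr1 E2 *.
set m := size w - l' in Hd E2 *.
have mdef : m = size w - l' by [].
rewrite (_ : forall x (t : seq (seq S * nat)), size (x :: t) = (size t).+1) //.
have hm : m <= size w by rewrite /m; lia.
have szmid : size (drop l (take m w)) = m - l by rewrite size_drop size_takel.
case E: (drop l (take m w)) szmid => [|m0 ms] szmid.
  by move: szmid E2 => /= ; lia.
have szms : (size ms).+1 = m - l by [].
rewrite -E IH ?E //; last first.
  rewrite szmid. move: sz; rewrite -/w; lia.
have Hm0 : m0 != a.
  have := lead_ne (a := a) (u := u). rewrite -/w -/l => /(_ ltac:(lia)).
  have -> : m0 = nth a (drop l (take m w)) 0 by rewrite E.
  by rewrite nth_drop addn0 nth_take.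
case Er: (rev w) => [|c' v]; first by move: Er; rewrite /w rev_cons; case: (rev u).
have Ec : c' = c.
  have := lead_nseq (a := c') (u := v) (x := l') ltac:(by rewrite /l' Er).
  rewrite -Er take_rev -/m Hd rev_nseq.
  by case: (l') hr => // k _ [].
subst c'.
have Hlast : last m0 ms != c.
  have := lead_ne (a := c) (u := v). rewrite -Er -/l' => /(_ ltac:(rewrite size_rev; lia)).
  rewrite nth_rev ?size_rev; last by lia.
  rewrite (last_nth m0) -E (set_nth_default m0) ?size_drop ?size_takel; last by lia.
  rewrite nth_drop nth_take; last by lia.
  by have -> : l + size ms = size w - l'.+1 by lia.
have Hw : w = nseq l a ++ ((m0 :: ms) ++ nseq l' c).
  rewrite -Ht -E -Hd catA. rewrite -(take_takel w (_ : l <= m)); last by lia.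
  by rewrite !cat_take_drop.
have lastn : forall k (x : S), last x (nseq k x) = x by move=> k x; elim: k.
have Hm0' : (a == m0) = false by rewrite eq_sym (negbTE Hm0).
have Hl' : (last m0 ms == c) = false by rewrite (negbTE Hlast).
have N1 : nruns (nseq l a ++ ((m0 :: ms) ++ nseq l' c)) + 0 =
          nruns (nseq l a) + nruns ((m0 :: ms) ++ nseq l' c).
  rewrite -(prednK hl0).
  have := nruns_cat a (nseq l.-1 a) m0 (ms ++ nseq l' c).
  by rewrite lastn Hm0'.
have N2 : nruns ((m0 :: ms) ++ nseq l' c) + 0 = nruns (m0 :: ms) + nruns (nseq l' c).
  rewrite -(prednK hr).
  have := nruns_cat m0 ms c (nseq l'.-1 c).
  by rewrite Hl'.
have R1 : nruns (nseq l a) = 1 by rewrite -(prednK hl0) nruns_nseqS.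
have R2 : nruns (nseq l' c) = 1 by rewrite -(prednK hr) nruns_nseqS.
rewrite [in RHS]Hw. lia.
Qed.

End GS.

Section FB.
Variable T : eqType.
Notation sym := (sym T).

Lemma leadlen_symE (u : seq sym) : leadlen_sym u = leadlen u.
Proof. by case: u. Qed.

Lemma subs_sub (u : seq sym) lo hi i j : 0 < lo -> lo <= i -> i <= j -> j <= hi ->
  subs u i j = drop (i - lo) (take (j - lo) (subs u lo hi)).
Proof.
move=> h0 h1 h2 h3. rewrite /subs take_takel; last by lia.
rewrite -(_ : j - i + (i - lo) = j - lo); last by lia.
rewrite -take_drop drop_drop. congr (take _ (drop _ _)). lia.
Qed.

Lemma size_subs (u : seq sym) lo hi : 0 < lo -> lo <= hi -> hi <= (size u).+1 ->
  size (subs u lo hi) = hi - lo.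
Proof. move=> *. rewrite /subs size_takel // size_drop. lia. Qed.

Lemma fb_G f (u : seq sym) lo hi : 0 < lo -> lo <= hi -> hi <= (size u).+1 ->
  fb_aux u f lo hi = G f (subs u lo hi).
Proof.
elim: f lo hi => [|f IH] lo hi h0 h1 h2 //.
rewrite /= !leadlen_symE.
set w := subs u lo hi.
have sw : size w = hi - lo by apply: size_subs.
case: leqP => H.
  have w0 : w = [::] by apply/size0nil; rewrite sw; lia.
  by rewrite w0.
rewrite sw (_ : (hi - lo == 0) = false); last by apply/eqP; lia.
have hl := leadlen_le w. have hr := leadlen_le (rev w). rewrite size_rev sw in hr. rewrite sw in hl.
case: eqP => // E1.
have E3 : subs u lo (lo + leadlen w) = take (leadlen w) w.
  rewrite (subs_sub u (lo := lo) (hi := hi)); try lia. by rewrite subnn drop0 addKn.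
have E4 : subs u (hi - leadlen (rev w)) hi = drop (hi - lo - leadlen (rev w)) w.
  rewrite (subs_sub u (lo := lo) (hi := hi)); try lia.
  by rewrite -sw take_size; congr drop; lia.
rewrite E3 E4.
case: leqP => E5; case: leqP => E6 //; try lia.
rewrite IH; try lia.
congr (_ :: G f _).
rewrite (subs_sub u (lo := lo) (hi := hi)); try lia.
rewrite -/w. congr (drop _ (take _ _)); lia.
Qed.

End FB.

Section Main.
Variable T : eqType.

Lemma G_sub (S : eqType) f (w : seq S) p : p \in G f w -> {subset p.1 <= w}.
Proof.
elim: f w => [|f IH] w //=.
case: ifP => _; first by [].
case: ifP => _; first by rewrite inE => /eqP -> /=.
case: ifP => _.
  rewrite inE => /eqP -> /= x; rewrite mem_cat => /orP[]; [exact: mem_take | exact: mem_drop].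
rewrite inE => /orP[/eqP -> /= x|/IH H x /H].
  rewrite mem_cat => /orP[]; [exact: mem_take | exact: mem_drop].
by move/mem_drop/mem_take.
Qed.

Lemma G_S (S : eqType) f (w : seq S) : G f.+1 w =
  if size w == 0 then [::] else
  if leadlen w == size w then [:: (w,0)] else
  if size w - leadlen (rev w) <= leadlen w then
    [:: (take (leadlen w) w ++ drop (size w - leadlen (rev w)) w,0)]
  else (take (leadlen w) w ++ drop (size w - leadlen (rev w)) w, leadlen w)
       :: G f (drop (leadlen w) (take (size w - leadlen (rev w)) w)).
Proof. by []. Qed.

Lemma filter_cons' (A : Type) (q : pred A) a l : filter q (a :: l) = if q a then a :: filter q l else filter q l.
Proof. by []. Qed.

Lemma nruns_map (S1 S2 : eqType) (g : S1 -> S2) (s : seq S1) : injective g ->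
  nruns (map g s) = nruns s.
Proof.
move=> gi. elim: s => [|x s IH] //.
case: s IH => [|y s] IH //.
change (nruns (map g (x :: y :: s))) with ((g x != g y) + nruns (map g (y :: s))).
change (nruns (x :: y :: s)) with ((x != y) + nruns (y :: s)).
by rewrite (inj_eq gi) -IH.
Qed.

Lemma flash_count (s : seq T) : s != [::] ->
  size [seq t <- flashback s | t != sentinel_token T] = (nruns s).+1./2.
Proof.
move=> sn.
have sh : size (hat s) = (size s).+2 by rewrite /hat /= size_cat size_map addn1.
rewrite /flashback fb_G; try lia.
have -> : subs (hat s) 1 (size s + 3) = hat s.
  by rewrite /subs drop0 take_oversize // sh; lia.
case: s sn sh => [|x s'] // _ sh.
set n := size (x :: s') in sh *.
have Hl : leadlen (hat (x :: s')) = 1 by [].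
have Hr : leadlen (rev (hat (x :: s'))) = 1.
  rewrite /hat rev_cons rev_cat -map_rev.
  by case: (rev (x :: s')).
rewrite (_ : n + 3 = (n + 2).+1); last by lia.
have E : G (n + 2).+1 (hat (x :: s')) = sentinel_token T :: G (n + 2) (map inr (x :: s')).
  rewrite G_S sh Hl Hr (_ : (n.+2 == 0) = false) //.
  rewrite (_ : (1 == n.+2) = false); last by apply/eqP; lia.
  rewrite (_ : (n.+2 - 1 <= 1) = false); last by apply/negbTE; rewrite -ltnNge; rewrite /n /=; lia.
  rewrite (_ : n.+2 - 1 = n.+1); last by lia.
  have hs : size (map (@inr bool T) (x :: s')) = n by rewrite size_map.
  rewrite /hat [take 1 _]/= [drop n.+1 _]/= [take n.+1 _]/= [drop 1 _]/= drop_size_cat ?size_map // take_size_cat ?size_map //.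
rewrite E.
have Hall : all (fun t => t != sentinel_token T) (G (n + 2) (map inr (x :: s'))).
  apply/allP => p /G_sub Hsub. apply/negP => /eqP Ep.
  have := Hsub (at_sym T). rewrite Ep => /(_ (mem_head _ _)).
  by case/mapP => y _.
have HC := G_count (f := n + 2) (w := map (@inr bool T) (x :: s')) isT.
rewrite nruns_map in HC; last by move=> ? ? [].
rewrite -HC; last by rewrite size_map; lia.
rewrite filter_cons' eqxx (all_filterP Hall).
by [].
Qed.
End Main.

Theorem theorem6p4 (T : eqType) (s : seq T) :
  s != [::] ->
  (forall toks : seq (token T), admissible s toks ->
     (nruns s).+1./2 <= size toks) /\
  size [seq t <- flashback s | t != sentinel_token T] = (nruns s).+1./2.
Proof.
move=> sn; split; last exact: flash_count.
move=> toks; exact: adm_lower.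
Qed.
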